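(* Let $\Sigma$ be a set of real $n\times n$ matrices and let $\|\cdot\|$ be a polyhedral seminorm on $\mathbb{R}^n$ that is nonincreasing for $\Sigma$. Let $\mathcal{B}=\{x\in\mathbb{R}^n:\|x\|\le 1\}$. If there is a left-infinite product $\dots A_{\sigma(2)}A_{\sigma(1)}$ of matrices from $\Sigma$ that does not contract $\|\cdot\|$, then there is a left-infinite product of matrices from $\Sigma$ that does not contract $\|\cdot\|$ and that is periodic with a period $p$ satisfying $p\le p^*=W(\mathcal{B})$.
   Context: A seminorm is polyhedral if its unit ball is a polyhedron (a set defined by finitely many linear inequalities). A seminorm $\|\cdot\|$ is nonincreasing for a matrix $A$ if $\|Ax\|\le\|x\|$ for all $x$, and nonincreasing for a set $\Sigma$ if it is so for every matrix of $\Sigma$. Given a sequence $\sigma$ of indices, the left-infinite product $\dots A_{\sigma(2)}A_{\sigma(1)}$ contracts $\|\cdot\|$ if there is $t$ with $A_{\sigma(t)}\cdots A_{\sigma(1)}\mathcal{B}\subset \mathrm{int}(\mathcal{B})$ (interior in $\mathbb{R}^n$); it is periodic with period $p$ if $\sigma(i+p)=\sigma(i)$ for all $i$. Faces: for a polyhedron $\mathcal{Q}$, a face is $\mathcal{Q}$, $\varnothing$, or a set $\mathcal{Q}\cap\{x:b^\top x=c\}$ that is nonempty, where $b^\top x\le c$ for all $x\in\mathcal{Q}$; its dimension is $d$ if its affine hull has dimension $d$. A proper face is a face other than $\mathcal{Q}$ and $\varnothing$. For a centrally symmetric polyhedron $\mathcal{Q}=-\mathcal{Q}$, a double-face is a set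 $F\cup -F$ with $F$ a proper face (its rank is the dimension of $F$). The lattice of double-faces of $\mathcal{Q}$ is the set consisting of all double-faces of $\mathcal{Q}$ together with $\mathcal{Q}$ and $\varnothing$, partially ordered by inclusion. An antichain is a set of pairwise incomparable elements, and $W(\mathcal{Q})$, the width, is the maximum number of elements of an antichain in the lattice of double-faces of $\mathcal{Q}$. (The unit ball $\mathcal{B}$ of a seminorm is centrally symmetric.) *)

(* Defs.v *)
From HB Require Import structures.
From mathcomp Require Import all_boot all_order all_algebra.
From mathcomp Require Import all_classical all_reals all_analysis.
Set Implicit Arguments. Unset Strict Implicit. Unset Printing Implicit Defensive.
Import Order.TTheory GRing.Theory Num.Theory.
Import numFieldNormedType.Exports.
Local Open Scope classical_set_scope.
Local Open Scope ring_scope.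

Section Defs.
Variables (R : realType) (n : nat).
Notation vec := 'cV[R]_n.

Definition dot (b x : vec) : R := \sum_(j < n) b j 0 * x j 0.

Definition seminorm (N : vec -> R) : Prop :=
  (forall x y, N (x + y) <= N x + N y) /\
  (forall (a : R) x, N (a *: x) = `|a| * N x).

Definition unit_ball (N : vec -> R) : set vec := [set x | N x <= 1].

Definition polyhedron (Q : set vec) : Prop :=
  exists (m : nat) (b : 'I_m -> vec) (c : 'I_m -> R),
    Q = [set x | forall i, dot (b i) x <= c i].

Definition polyhedral (N : vec -> R) : Prop := polyhedron (unit_ball N).

Definition nonincreasing_for (N : vec -> R) (A : 'M[R]_n) : Prop :=
  forall x, N (A *m x) <= N x.

(* left-infinite products: sigma : nat -> I, with sigma 0 the paper's sigma(1);
   lprod Sigma sigma t = A_{sigma(t)} ... A_{sigma(1)} (paper indexing) *)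
Fixpoint lprod (I : Type) (Sigma : I -> 'M[R]_n) (sigma : nat -> I) (t : nat)
  : 'M[R]_n :=
  match t with
  | 0 => 1%:M
  | t'.+1 => Sigma (sigma t') *m lprod Sigma sigma t'
  end.

Definition contracts (I : Type) (Sigma : I -> 'M[R]_n) (N : vec -> R)
  (sigma : nat -> I) : Prop :=
  exists t : nat,
    [set lprod Sigma sigma t *m x | x in unit_ball N] `<=` interior (unit_ball N).

Definition periodic_idx (I : Type) (sigma : nat -> I) (p : nat) : Prop :=
  (0 < p)%N /\ forall i, sigma (i + p)%N = sigma i.

Definition face (Q F : set vec) : Prop :=
  F = Q \/ F = set0 \/
  exists (b : vec) (c : R),
    (forall x, Q x -> dot b x <= c) /\
    F = Q `&` [set x | dot b x = c] /\ F !=set0.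

Definition proper_face (Q F : set vec) : Prop :=
  face Q F /\ F <> Q /\ F <> set0.

Definition double_face (Q D : set vec) : Prop :=
  exists F, proper_face Q F /\ D = F `|` [set - x | x in F].

Definition dface_lattice (Q D : set vec) : Prop :=
  double_face Q D \/ D = Q \/ D = set0.

Definition antichain (Q : set vec) (k : nat) (a : 'I_k -> set vec) : Prop :=
  (forall i, dface_lattice Q (a i)) /\
  (forall i j, i != j -> ~ (a i `<=` a j)).

Definition is_width (Q : set vec) (w : nat) : Prop :=
  (exists a : 'I_w -> set vec, antichain Q a) /\
  (forall (k : nat) (a : 'I_k -> set vec), antichain Q a -> (k <= w)%N).

End Defs.

(* Main.v *)
Require Import Defs.
From HB Require Import structures.
From mathcomp Require Import all_boot all_order all_algebra.
From mathcomp Require Import all_classical all_reals all_analysis.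
From mathcomp Require Import lra zify.
Import Order.TTheory GRing.Theory Num.Theory.
Local Open Scope ring_scope.

Import Order.TTheory GRing.Theory Num.Theory.
Local Open Scope ring_scope.

Section Basic.
Variables (R : realType) (n : nat).
Notation vec := 'cV[R]_n.

Lemma dotDr (b x y : vec) : dot b (x + y) = dot b x + dot b y.
Proof. by rewrite /dot -big_split; apply: eq_bigr => j _; rewrite mxE mulrDr. Qed.

Lemma dotZr (b x : vec) a : dot b (a *: x) = a * dot b x.
Proof. by rewrite /dot mulr_sumr; apply: eq_bigr => j _; rewrite mxE mulrCA. Qed.

Lemma dotNr (b x : vec) : dot b (- x) = - dot b x.
Proof. by rewrite -scaleN1r dotZr mulN1r. Qed.

Lemma dotBr (b x y : vec) : dot b (x - y) = dot b x - dot b y.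
Proof. by rewrite dotDr dotNr. Qed.

Lemma dot0r (b : vec) : dot b 0 = 0.
Proof. by rewrite -(scale0r (0:vec)) dotZr mul0r. Qed.

Lemma dot_suml (m : nat) (J : {set 'I_m}) (b : 'I_m -> vec) x :
  dot (\sum_(i in J) b i) x = \sum_(i in J) dot (b i) x.
Proof.
rewrite /dot exchange_big /=; apply: eq_bigr => j _.
by rewrite summxE mulr_suml.
Qed.

End Basic.

Lemma nat_max (P : nat -> Prop) (K : nat) : (exists k, P k) ->
  (forall k, P k -> (k <= K)%N) -> exists k, P k /\ forall k', P k' -> (k' <= k)%N.
Proof.
move=> [k0 Pk0] ub.
have ex : exists i, `[< P i >] by exists k0; apply/asboolP.
have ub' : forall i, `[< P i >] -> (i <= K)%N by move=> i /asboolP; apply: ub.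
case: (ex_maxnP ex ub') => k /asboolP Pk Hk; exists k; split => // k' Pk'.
by apply: Hk; apply/asboolP.
Qed.

Lemma nat_min (P : nat -> Prop) : (exists k, P k) ->
  exists k, P k /\ forall k', P k' -> (k <= k')%N.
Proof.
move=> [k0 Pk0].
have ex : exists i, `[< P i >] by exists k0; apply/asboolP.
case: (ex_minnP ex) => k /asboolP Pk Hk; exists k; split => // k' Pk'.
by apply: Hk; apply/asboolP.
Qed.

Lemma modS_full (t p : nat) : (0 < p)%N -> (p %| t.+1)%N -> ((t %% p).+1 = p)%N.
Proof.
move=> p0 hd; have := divn_eq t p; have := ltn_pmod t p0; move: hd => /dvdnP [q hq].
set d := (t %/ p)%N; set r := (t %% p)%N => h1 h2.
case: (leqP q d) => h.
  have : (q * p <= d * p)%N by rewrite leq_mul2r h orbT.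
  lia.
have : (d.+1 * p <= q * p)%N by rewrite leq_mul2r h orbT.
lia.
Qed.


Import Order.TTheory GRing.Theory Num.Theory.
Local Open Scope ring_scope.
Set Implicit Arguments. Unset Strict Implicit.

Section Poly.
Variables (R : realType) (n m : nat) (b : 'I_m -> 'cV[R]_n) (c : 'I_m -> R).
Notation vec := 'cV[R]_n.

Definition Bs (x : vec) := forall i, dot (b i) x <= c i.
Definition tight (x : vec) : {set 'I_m} := [set i | dot (b i) x == c i].
Definition Bd (x : vec) := exists k, dot (b k) x = c k /\ 0 < c k.
Definition FJ (J : {set 'I_m}) (x : vec) := Bs x /\ forall i, i \in J -> dot (b i) x = c i.

Lemma eps_seq (y z : vec) (s : seq 'I_m) : exists2 e : R, 0 < e &
  forall i, i \in s -> dot (b i) y < c i ->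
    e * (`|dot (b i) y - dot (b i) z| + 1) <= c i - dot (b i) y.
Proof.
elim: s => [|i s [e e0 He]]; first by exists 1.
case: (ltP (dot (b i) y) (c i)) => hi; last first.
  exists e => // j; rewrite inE => /orP[/eqP -> |js] hj; first by move: hi; rewrite leNgt hj.
  exact: He.
set d := `|dot (b i) y - dot (b i) z| + 1.
have d0 : 0 < d by rewrite /d ltr_pwDr.
exists (Num.min e ((c i - dot (b i) y) / d)).
  by rewrite lt_min e0 divr_gt0 // subr_gt0.
move=> j; rewrite inE => /orP[/eqP -> |js] hj.
  apply: le_trans (_ : (c i - dot (b i) y) / d * d <= _).
    by rewrite ler_pM2r // ge_min lexx orbT.
  by rewrite divfK // gt_eqF.
apply: le_trans (He j js hj).
have dj : 0 <= `|dot (b j) y - dot (b j) z| + 1 by rewrite addr_ge0.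
by rewrite ler_wpM2r // ge_min lexx.
Qed.

Lemma eps_all (y z : vec) : exists2 e : R, 0 < e &
  forall i, dot (b i) y < c i ->
    e * (`|dot (b i) y - dot (b i) z| + 1) <= c i - dot (b i) y.
Proof.
have [e e0 He] := eps_seq y z (enum 'I_m).
by exists e => // i; apply: He; rewrite mem_enum.
Qed.

Lemma tightP x i : (i \in tight x) = (dot (b i) x == c i).
Proof. by rewrite inE. Qed.

Lemma Klem (y z : vec) : Bs y -> Bs z -> tight y \subset tight z ->
  exists2 e : R, 0 < e & Bs (y + e *: (y - z)).
Proof.
move=> By Bz sub; have [e e0 He] := eps_all y z.
exists e => // i; rewrite dotDr dotZr dotBr.
have := By i; rewrite le_eqVlt => /orP[/eqP hy | hy].
  have : i \in tight z by apply: (fintype.subsetP sub); rewrite tightP hy.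
  by rewrite tightP => /eqP hz; rewrite hy hz subrr mulr0 addr0.
have := He i hy.
have := ler_norm (dot (b i) y - dot (b i) z).
set u := dot (b i) y - dot (b i) z; set v := dot (b i) y.
move=> h1 h2. 
have : e * u <= e * (`|u| + 1) by rewrite ler_pM2l //; lra.
lra.
Qed.


Hypothesis HS : forall x, Bs x -> Bs (- x).
Hypothesis HA : forall x, exists2 t : R, 0 < t & Bs (t *: x).

Lemma Bs0 : Bs 0.
Proof. by have [t _] := HA 0; rewrite scaler0. Qed.

Lemma c_ge0 i : 0 <= c i.
Proof. by have := Bs0 i; rewrite dot0r. Qed.

Lemma cle0_triv i : c i <= 0 -> forall x, dot (b i) x <= c i.
Proof.
move=> ci x; have ci0 : c i = 0 by apply/eqP; rewrite eq_le ci c_ge0.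
have [t t0 Bt] := HA x; have := Bt i; rewrite dotZr ci0 => h.
by rewrite -(pmulr_rle0 _ t0).
Qed.

Lemma Slem u : Bs u -> ~ Bd u -> exists2 e : R, 0 < e & Bs ((1 + e) *: u).
Proof.
move=> Bu nBd; have [|e e0 He] := Klem Bu Bs0.
  apply/fintype.subsetP => i; rewrite !tightP => /eqP hi.
  have ci : c i <= 0 by rewrite leNgt; apply/negP => ci; apply: nBd; exists i.
  have ci0 : c i = 0 by apply/eqP; rewrite eq_le ci c_ge0.
  by rewrite dot0r ci0.
by exists e => //; move: He; rewrite subr0 scalerDl scale1r.
Qed.

Lemma Bd_scale u l : Bd u -> 1 < l -> ~ Bs (l *: u).
Proof.
move=> [k [hk ck]] l1 Bl; have := Bl k; rewrite dotZr hk.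
have : c k < l * c k by rewrite -[X in X < _]mul1r ltr_pM2r.
lra.
Qed.

Definition stab (M : 'M[R]_n) := forall x, Bs x -> Bs (M *m x).

Lemma Bd_anti M u : stab M -> Bs u -> Bd (M *m u) -> Bd u.
Proof.
move=> HM Bu Bd1; apply: contrapT => nBd.
have [e e0 He] := Slem Bu nBd.
apply: (Bd_scale Bd1 (_ : 1 < 1 + e)); first by rewrite ltrDl.
by rewrite scalemxAr; apply: HM.
Qed.

Lemma Bd_opp u : Bs u -> Bd u -> Bd (- u).
Proof.
move=> Bu Bdu; apply: contrapT => nBd.
have [e e0 He] := Slem (HS Bu) nBd.
apply: (Bd_scale Bdu (_ : 1 < 1 + e)); first by rewrite ltrDl.
by have := HS He; rewrite scalerN opprK.
Qed.

Lemma prop_tight M y z k : stab M -> Bs y -> Bs z -> tight y \subset tight z ->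
  dot (b k) (M *m y) = c k -> dot (b k) (M *m z) = c k.
Proof.
move=> HM By Bz sub hk.
have [e e0 He] := Klem By Bz sub.
have := HM _ He k; rewrite mulmxDr -scalemxAr mulmxBr dotDr dotZr dotBr hk.
have := HM _ Bz k.
set d := dot (b k) (M *m z) => h1 h2.
nra.
Qed.

Lemma Bd_prop M y z : stab M -> Bs y -> Bs z -> tight y \subset tight z ->
  Bd (M *m y) -> Bd (M *m z).
Proof.
move=> HM By Bz sub [k [hk ck]]; exists k; split => //.
exact: (prop_tight HM By Bz sub hk).
Qed.

End Poly.

Import Order.TTheory GRing.Theory Num.Theory.
Import numFieldNormedType.Exports.
Local Open Scope ring_scope.
Set Implicit Arguments. Unset Strict Implicit.

Section Top.
Variables (R : realType) (n m : nat) (b : 'I_m -> 'cV[R]_n) (c : 'I_m -> R).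
Notation vec := 'cV[R]_n.

Lemma entry_le (x : vec) j : `|x j 0| <= `|x|.
Proof.
have -> : `|x| = mx_norm x by [].
rewrite mx_normrE.
apply: (le_trans _ (le_bigmax _ _ (j, 0))) => //=.
Qed.

Lemma dot_bound (bb x : vec) : `|dot bb x| <= (\sum_j `|bb j 0|) * `|x|.
Proof.
rewrite /dot mulr_suml; apply: le_trans (ler_norm_sum _ _ _) _.
apply: ler_sum => j _; rewrite normrM ler_wpM2l //; exact: entry_le.
Qed.

Lemma min_pos (P : pred 'I_m) (f : 'I_m -> R) : (forall i, P i -> 0 < f i) ->
  exists2 e : R, 0 < e & forall i, P i -> e <= f i.
Proof.
move=> Hf.
suff [e e0 He] : exists2 e : R, 0 < e & forall i, i \in enum 'I_m -> P i -> e <= f i.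
  by exists e => // i; apply: He; rewrite mem_enum.
elim: (enum 'I_m) => [|i s [e e0 He]]; first by exists 1.
case Pi: (P i).
  exists (Num.min e (f i)); first by rewrite lt_min e0 Hf.
  move=> j; rewrite inE => /orP[/eqP -> _|js Pj]; first by rewrite ge_min lexx orbT.
  by rewrite ge_min He.
exists e => // j; rewrite inE => /orP[/eqP -> |js]; first by rewrite Pi.
exact: He.
Qed.

Lemma Top1 u : Bd b c u -> ~ interior (Bs b c : set vec) u.
Proof.
move=> Bdu /nbhs_ballP [e e0 He].
set d := e / (`|u| + 1).
have d0 : 0 < d by rewrite divr_gt0 // ltr_wpDl.
apply: (Bd_scale Bdu (_ : 1 < 1 + d)); first by rewrite ltrDl.
apply: He; rewrite -ball_normE /= scalerDl scale1r opprD addrA subrr add0r normrN.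
rewrite normrZ gtr0_norm // /d.
have u1 : 0 < `|u| + 1 by rewrite ltr_wpDl.
by rewrite mulrAC ltr_pdivrMr // ltr_pM2l // ltrDl.
Qed.

Hypothesis HA : forall x, exists2 t : R, 0 < t & Bs b c (t *: x).

Lemma Top2 u : Bs b c u -> ~ Bd b c u -> interior (Bs b c : set vec) u.
Proof.
move=> Bu nBd; apply/nbhs_ballP.
pose K i := \sum_j `|b i j 0| + 1.
have K0 i : 0 < K i by rewrite ltr_wpDl // sumr_ge0.
have Hp : forall i, 0 < c i -> 0 < (c i - dot (b i) u) / K i.
  move=> i ci; rewrite divr_gt0 // subr_gt0 lt_def Bu andbT.
  by apply/eqP => h; apply: nBd; exists i.
have [e e0 He] := min_pos Hp.
exists e => // v; rewrite -ball_normE /= => uv i.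
case: (ltP 0 (c i)) => ci; last exact: (cle0_triv HA).
have := He i ci; rewrite ler_pdivlMr // => h.
have := dot_bound (b i) (v - u); rewrite dotBr distrC => hb.
have : `|dot (b i) v - dot (b i) u| <= (\sum_j `|b i j 0| + 1) * `|u - v|.
  rewrite distrC; apply: (le_trans hb); rewrite [`|v - u|]distrC ler_wpM2r // lerDl //.
have : (\sum_j `|b i j 0| + 1) * `|u - v| <= e * K i.
  by rewrite mulrC ler_wpM2r ?(ltW (K0 i)) // ltW.
have := ler_norm (dot (b i) v - dot (b i) u).
rewrite -/(K i); lra.
Qed.

End Top.

Import Order.TTheory GRing.Theory Num.Theory.
Import numFieldNormedType.Exports.
Local Open Scope classical_set_scope.
Local Open Scope ring_scope.
Set Implicit Arguments. Unset Strict Implicit.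

Section Dyn.
Variables (R : realType) (n m : nat) (b : 'I_m -> 'cV[R]_n) (c : 'I_m -> R).
Notation vec := 'cV[R]_n.
Variables (I : Type) (Sigma : I -> 'M[R]_n).
Hypothesis HS : forall x, Bs b c x -> Bs b c (- x).
Hypothesis HA : forall x, exists2 t : R, 0 < t & Bs b c (t *: x).
Hypothesis HSig : forall i, stab b c (Sigma i).

Notation Bs := (Bs b c).
Notation Bd := (Bd b c).
Notation tight := (tight b c).
Notation FJ := (FJ b c).

Lemma stab1 : stab b c 1%:M.
Proof. by move=> x; rewrite mul1mx. Qed.

Lemma lprod_stab s t : stab b c (lprod Sigma s t).
Proof.
elim: t => [|t IH] /=; first exact: stab1.
by move=> x Bx; rewrite -mulmxA; apply: HSig; apply: IH.
Qed.

Lemma lprod_shift s t :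
  lprod Sigma s t.+1 = lprod Sigma (fun k => s k.+1) t *m Sigma (s 0%N).
Proof.
elim: t => [|t IH]; first by rewrite /= mulmx1 mul1mx.
transitivity (Sigma (s t.+1) *m lprod Sigma s t.+1); first by [].
by rewrite IH mulmxA.
Qed.

Definition Dset (J : {set 'I_m}) : set vec := FJ J `|` [set - x | x in FJ J].

Definition RR (J : {set 'I_m}) := exists y, Bs y /\ tight y = J /\
  exists tau : nat -> I, forall t, Bd (lprod Sigma tau t *m y).

Definition edge (e : I) (J J' : {set 'I_m}) :=
  forall x, Dset J x -> Dset J' (Sigma e *m x).

Lemma tight_FJ J x : FJ J x -> J \subset tight x.
Proof.
by move=> [_ H]; apply/fintype.subsetP => i iJ; rewrite tightP H.
Qed.

Lemma RR_Dset J : RR J -> forall x, Dset J x -> Bs x /\ Bd x.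
Proof.
move=> [y [By [Jy [tau Htau]]]] x.
have Bdy : Bd y by have := Htau 0%N; rewrite mul1mx.
have H z : FJ J z -> Bs z /\ Bd z.
  move=> Fz; split; first by case: Fz.
  have sub : tight y \subset tight z by rewrite Jy; exact: tight_FJ.
  by have := Bd_prop stab1 By (proj1 Fz) sub; rewrite !mul1mx; apply.
move=> [Fx | [z Fz <-]]; first exact: H.
have [Bz Bdz] := H z Fz; split; first exact: HS.
exact: (Bd_opp HS HA).
Qed.

Lemma RR_succ J : RR J -> exists e J', RR J' /\ edge e J J'.
Proof.
move=> [y [By [Jy [tau Htau]]]].
exists (tau 0%N), (tight (Sigma (tau 0%N) *m y)); split.
  exists (Sigma (tau 0%N) *m y); split; first exact: HSig.
  split => //; exists (fun k => tau k.+1) => t.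
  by rewrite mulmxA -lprod_shift.
have HF z : FJ J z -> FJ (tight (Sigma (tau 0%N) *m y)) (Sigma (tau 0%N) *m z).
  move=> Fz; split; first by apply: HSig; case: Fz.
  move=> i; rewrite tightP => /eqP hi.
  apply: (prop_tight (HSig _) By (proj1 Fz) _ hi).
  by rewrite Jy; exact: tight_FJ.
move=> x [Fx | [z Fz <-]]; first by left; apply: HF.
by right; exists (Sigma (tau 0%N) *m z); [apply: HF | rewrite mulmxN].
Qed.


Section Start.
Variable sigma : nat -> I.
Hypothesis Hnc : ~ exists t, [set lprod Sigma sigma t *m x | x in Bs] `<=` interior (Bs : set vec).

Definition E t J := exists y, Bs y /\ tight y = J /\ Bd (lprod Sigma sigma t *m y).

Lemma E_ne t : exists J, E t J.
Proof.
apply: contrapT => hne; apply: Hnc; exists t => _ [x Bx <-].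
apply: contrapT => hint.
have Bl : Bs (lprod Sigma sigma t *m x) by apply: lprod_stab.
have Bdl : Bd (lprod Sigma sigma t *m x).
  by apply: contrapT => nb; apply: hint; apply: (Top2 HA).
by apply: hne; exists (tight x), x.
Qed.

Lemma E_dec s t J : (s <= t)%N -> E t J -> E s J.
Proof.
move=> /subnK <-; elim: (t - s)%N => [|k IH] //= [y [By [Jy Bdy]]].
apply: IH; exists y; split => //; split => //.
rewrite addSn /= -mulmxA in Bdy.
by apply: (Bd_anti HA (HSig _)) Bdy; apply: lprod_stab.
Qed.

Lemma E_all : exists J, forall t, E t J.
Proof.
apply: contrapT => hne.
have H : forall J, exists t, ~ E t J.
  move=> J; apply: contrapT => h; apply: hne; exists J => t.
  by apply: contrapT => h'; apply: h; exists t.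
have [f Hf] := choice H.
pose T := (\max_(J : {set 'I_m}) f J)%N.
have [J EJ] := E_ne T.
apply: (Hf J); apply: E_dec EJ.
exact: (leq_bigmax J).
Qed.

Lemma RR_ne : exists J, RR J.
Proof.
have [J HJ] := E_all; exists J.
have [y [By [Jy _]]] := HJ 0%N.
exists y; split => //; split => //; exists sigma => t.
have [y' [By' [Jy' Bd']]] := HJ t.
apply: (Bd_prop (lprod_stab _ _) By' By) Bd'.
by rewrite Jy Jy'.
Qed.

End Start.


Definition le (J J' : {set 'I_m}) := Dset J `<=` Dset J'.

Lemma exists_max (S : {set 'I_m} -> Prop) : (exists J, S J) ->
  exists J, S J /\ forall J', S J' -> le J J' -> le J' J.
Proof.
move=> [J0 SJ0].
pose h J := #|finset (fun J' : {set 'I_m} => `[< le J' J >])|.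
have ub : forall k, (exists J, S J /\ h J = k) -> (k <= #|{: {set 'I_m}}|)%N.
  by move=> k [J' [_ <-]]; apply: max_card.
have [k [[J [SJ hJ]] Hk]] := nat_max (fun k => exists J, S J /\ h J = k) _ (ex_intro _ (h J0) (ex_intro _ J0 (conj SJ0 erefl))) ub.
exists J; split => // J' SJ' le1; apply: contrapT => nle.
have : (h J < h J')%N.
  apply: proper_card; apply/properP; split.
    apply/fintype.subsetP => K; rewrite !inE => hK.
    by move=> x /hK /le1.
  exists J'; rewrite inE; first by apply/asboolP.
  by apply/asboolPn.
have := Hk (h J') (ex_intro _ J' (conj SJ' erefl)); rewrite -hJ => h1 h2.
by have := leq_trans h2 h1; rewrite ltnn.
Qed.

Definition Cand J J' := RR J' /\ exists e, edge e J J'.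

Lemma edge_le e J J1 J2 : edge e J J1 -> le J1 J2 -> edge e J J2.
Proof. by move=> h l x /h /l. Qed.

Section Path.
Variable sigma : nat -> I.
Hypothesis Hnc : ~ exists t, [set lprod Sigma sigma t *m x | x in Bs] `<=` interior (Bs : set vec).

Lemma succ_ex : exists f : {set 'I_m} -> {set 'I_m}, forall J, RR J ->
  Cand J (f J) /\ forall J'', Cand J J'' -> le (f J) J'' -> le J'' (f J).
Proof.
have H : forall J, exists J', RR J -> Cand J J' /\
    forall J'', Cand J J'' -> le J' J'' -> le J'' J'.
  move=> J; case: (pselect (RR J)) => hJ; last by exists J.
  have [e [J' [RJ' eJ]]] := RR_succ hJ.
  have [J1 [C1 M1]] := exists_max (ex_intro (Cand J) J' (conj RJ' (ex_intro _ e eJ))).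
  by exists J1.
have [f Hf] := choice H; by exists f.
Qed.


Variable w : nat.
Hypothesis Wb : forall (k : nat) (a : 'I_k -> set vec),
  (forall i, exists J, RR J /\ a i = Dset J) ->
  (forall i j, i != j -> ~ (a i `<=` a j)) -> (k <= w)%N.

Lemma periodic_exists : exists (sig' : nat -> I) (p : nat),
  (0 < p)%N /\ (p <= w)%N /\ (forall i, sig' (i + p)%N = sig' i) /\
  forall t, exists x, Bs x /\ ~ interior (Bs : set vec) (lprod Sigma sig' t *m x).
Proof.
have [f Hf] := succ_ex.
have [J0 [RJ0 MJ0]] := exists_max (RR_ne Hnc).
pose path k := iter k f J0.
have pRR : forall k, RR (path k).
  by elim=> [|k IH] //=; have [[]] := Hf _ IH.
have pedge : forall k, exists e, edge e (path k) (path k.+1).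
  by move=> k; have [[_ [e he]] _] := Hf _ (pRR k); exists e.
have pmax : forall i j, (i < j)%N -> le (path i) (path j) -> le (path j) (path i).
  move=> [|i] j ij lij; first by apply: MJ0 => //.
  have [_ M] := Hf _ (pRR i).
  apply: M => //; split; first exact: pRR.
  by have [e he] := pedge i; exists e; apply: edge_le he lij.
have [a [bb [ab [bw lba]]]] : exists a bb, (a < bb)%N /\ (bb <= w)%N /\ le (path bb) (path a).
  apply: contrapT => hno.
  have : (w.+1 <= w)%N; last by rewrite ltnn.
  apply: (Wb (a := fun i : 'I_w.+1 => Dset (path i))).
    by move=> i; exists (path i); split => //; apply: pRR.
  move=> i j ij lij; apply: hno.
  case: (ltngtP i j) => hij.
  - exists i, j; split => //; split; first by rewrite -ltnS.
    exact: pmax.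
  - exists j, i; split => //; split => //; by rewrite -ltnS.
  - by move: ij; rewrite (val_inj hij) eqxx.
have [g Hg] := choice pedge.
pose p := (bb - a)%N.
have p0 : (0 < p)%N by rewrite subn_gt0.
pose sig' t := g (a + t %% p)%N.
exists sig', p; split => //; split; first by rewrite /p; lia.
split; first by move=> i; rewrite /sig' modnDr.
have inv : forall t x, Dset (path a) x -> Dset (path (a + t %% p)%N) (lprod Sigma sig' t *m x).
  move=> t x hx; elim: t => [|t IH]; first by rewrite mod0n addn0 /= mul1mx.
  rewrite /= -mulmxA.
  have := Hg (a + t %% p)%N _ IH.
  rewrite modnS; case: ifP => hd; last by rewrite addnS.
  rewrite addn0 -addnS modS_full // /p subnKC ?(ltnW ab) //.
  by apply: lba.
have [y [By [Jy _]]] := pRR a.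
have ya : Dset (path a) y.
  left; split => // i; rewrite -Jy tightP => /eqP //.
move=> t; exists y; split => //.
have := inv t y ya => /(RR_Dset (pRR _)) [_ Bdt].
exact: Top1.
Qed.

End Path.
End Dyn.

Import Order.TTheory GRing.Theory Num.Theory.
Import numFieldNormedType.Exports.
Local Open Scope classical_set_scope.
Local Open Scope ring_scope.
Set Implicit Arguments. Unset Strict Implicit.

Section Faces.
Variables (R : realType) (n m : nat) (b : 'I_m -> 'cV[R]_n) (c : 'I_m -> R).
Notation vec := 'cV[R]_n.
Hypothesis HS : forall x, Bs b c x -> Bs b c (- x).
Hypothesis HA : forall x, exists2 t : R, 0 < t & Bs b c (t *: x).

Notation Bs := (Bs b c).
Notation Bd := (Bd b c).
Notation tight := (tight b c).
Notation FJ := (FJ b c).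

Lemma FJ_exposed J : FJ J = (Bs : set vec) `&` [set x | dot (\sum_(i in J) b i) x = \sum_(i in J) c i].
Proof.
apply/seteqP; split => x.
  move=> [Bx Hx]; split => //=; rewrite dot_suml.
  by apply: eq_bigr => i iJ; apply: Hx.
move=> [Bx /= hx]; split => // i iJ.
have h0 : \sum_(i in J) (c i - dot (b i) x) = 0.
  by rewrite sumrB -dot_suml hx subrr.
have := psumr_eq0P (P := fun i => i \in J) (F := fun i => c i - dot (b i) x) _ h0 iJ.
  move=> h.
  have hp : forall j, j \in J -> 0 <= c j - dot (b j) x by move=> j _; rewrite subr_ge0; apply: Bx.
  have := h hp; lra.
Qed.

Lemma FJ_proper J y : Bs y -> tight y = J -> Bd y -> proper_face (Bs : set vec) (FJ J).
Proof.
move=> By Jy [k [hk ck]].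
have yF : FJ J y by split => // i; rewrite -Jy tightP => /eqP.
split; last split.
- right; right; exists (\sum_(i in J) b i), (\sum_(i in J) c i); split.
    by move=> x Bx; rewrite dot_suml; apply: ler_sum => i _; apply: Bx.
  by split; [exact: FJ_exposed | exists y].
- move=> hF; have : FJ J 0 by rewrite hF; exact: Bs0 HA.
  move=> [_ /(_ k)]; rewrite dot0r -Jy tightP hk eqxx => /(_ isT) h.
  by move: ck; rewrite -h ltxx.
- by move=> hF; have : (set0 : set vec) y by rewrite -hF.
Qed.

Lemma face_is_FJ F : proper_face (Bs : set vec) F -> exists J, F = FJ J.
Proof.
move=> [[-> [] // | [-> [] // | [bb [cc [hle [hF hne]]]]]] [nQ n0]].
have [x1 Fx1] := hne.
have [k [[x0 [Fx0 hk]] Hk]] := nat_min (fun k => exists x, F x /\ #|tight x| = k)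
  (ex_intro _ _ (ex_intro _ x1 (conj Fx1 erefl))).
have FE x : F x <-> Bs x /\ dot bb x = cc by rewrite hF.
have sub : forall y, F y -> tight x0 \subset tight y.
  move=> y Fy; apply/fintype.subsetP => i ix0; apply: contrapT => /negP iy.
  pose z := 2^-1 *: (x0 + y).
  have [Bx0 bx0] := proj1 (FE x0) Fx0.
  have [By0 by0] := proj1 (FE y) Fy.
  have dz v : dot v z = (dot v x0 + dot v y) / 2 by rewrite /z dotZr dotDr mulrC.
  have Fz : F z.
    apply/FE; split; last by rewrite dz bx0 by0; lra.
    by move=> j; rewrite dz; have := Bx0 j; have := By0 j; lra.
  have sz : tight z \subset tight x0 :\ i.
    apply/fintype.subsetP => j; rewrite !inE dz => /eqP hj.
    have := Bx0 j; have := By0 j => h1 h2.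
    have e1 : dot (b j) x0 = c j by lra.
    have e2 : dot (b j) y = c j by lra.
    rewrite e1 eqxx andbT; apply/eqP => ji.
    by move/negP: iy; apply; rewrite -ji tightP e2.
  have := Hk _ (ex_intro _ z (conj Fz erefl)).
  have := subset_leq_card sz.
  have := cardsD1 i (tight x0); rewrite ix0 hk; lia.
exists (tight x0); apply/seteqP; split => y.
  move=> Fy; split; first by case: (proj1 (FE y) Fy).
  by move=> i /(fintype.subsetP (sub y Fy)); rewrite tightP => /eqP.
move=> [By hy].
have s0 : tight x0 \subset tight y.
  by apply/fintype.subsetP => i ix; rewrite tightP hy.
have [e e0 Bw] := Klem (proj1 (proj1 (FE x0) Fx0)) By s0.
apply/FE; split => //.
have := hle _ Bw; rewrite dotDr dotZr dotBr (proj2 (proj1 (FE x0) Fx0)).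
have := hle _ By; nra.
Qed.


Definition decode (o : option (option {set 'I_m})) : set vec :=
  match o with
  | None => set0
  | Some None => Bs
  | Some (Some J) => FJ J `|` [set - x | x in FJ J]
  end.

Lemma lattice_code D : dface_lattice (Bs : set vec) D -> exists o, D = decode o.
Proof.
move=> [[F [pF ->]] | [-> | ->]]; last 2 first.
- by exists (Some None).
- by exists None.
have [J ->] := face_is_FJ pF.
by exists (Some (Some J)).
Qed.

Lemma antichain_bound k (a : 'I_k -> set vec) : antichain (Bs : set vec) a ->
  (k <= #|{: option (option {set 'I_m})}|)%N.
Proof.
move=> [hl hac].
have [f Hf] := choice (fun i => lattice_code (hl i)).
have finj : injective f.
  move=> i j fij; apply: contrapT => /eqP ij.
  by apply: (hac i j ij); rewrite (Hf i) (Hf j) fij.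
by have := leq_card f finj; rewrite card_ord.
Qed.

Lemma width_exists : exists w, is_width (Bs : set vec) w.
Proof.
have ex0 : exists k, exists a : 'I_k -> set vec, antichain (Bs : set vec) a.
  exists 0%N, (fun _ => set0); split; first by move=> i; right; right.
  by move=> [].
have [w [[a ha] Hw]] := nat_max (fun k => exists a : 'I_k -> set vec, antichain (Bs : set vec) a)
  #|{: option (option {set 'I_m})}| ex0 (fun k '(ex_intro a ha) => antichain_bound ha).
exists w; split; first by exists a.
by move=> k a' ha'; apply: Hw; exists a'.
Qed.

End Faces.

Import Order.TTheory GRing.Theory Num.Theory.
Import numFieldNormedType.Exports.
Local Open Scope classical_set_scope.
Local Open Scope ring_scope.

Theorem theorem1 (R : realType) (n : nat) (I : Type) (Sigma : I -> 'M[R]_n)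
  (N : 'cV[R]_n -> R) :
  seminorm N -> polyhedral N ->
  (forall i, nonincreasing_for N (Sigma i)) ->
  (exists sigma : nat -> I, ~ contracts Sigma N sigma) ->
  exists (sigma : nat -> I) (p : nat),
    ~ contracts Sigma N sigma /\ periodic_idx sigma p /\
    exists w : nat, is_width (unit_ball N) w /\ (p <= w)%N.
Proof.
move=> [Ntri Nhom] [m [b [c hB]]] HN [sigma Hnc].
have EB : unit_ball N = Bs b c by rewrite hB.
have N0 : N 0 = 0 by rewrite -(scale0r (0 : 'cV[R]_n)) Nhom normr0 mul0r.
have Nge0 x : 0 <= N x.
  have := Ntri x (- x); rewrite subrr N0 -scaleN1r Nhom normrN normr1 mul1r.
  lra.
have HS : forall x, Bs b c x -> Bs b c (- x).
  move=> x; rewrite -EB /unit_ball /= -scaleN1r Nhom normrN normr1 mul1r //.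
have HA : forall x, exists2 t : R, 0 < t & Bs b c (t *: x).
  move=> x; exists (N x + 1)^-1; first by rewrite invr_gt0 ltr_wpDl.
  rewrite -EB /unit_ball /= Nhom gtr0_norm ?invr_gt0 ?ltr_wpDl //.
  rewrite mulrC ler_pdivrMr ?ltr_wpDl // mul1r lerDl //.
have HSig : forall i, stab b c (Sigma i).
  move=> i x; rewrite -EB /unit_ball /= => Nx; exact: le_trans (HN i x) Nx.
have [w Hw] := width_exists b c.
have Wb : forall (k : nat) (a : 'I_k -> set 'cV[R]_n),
  (forall i, exists J, RR b c Sigma J /\ a i = Dset b c J) ->
  (forall i j, i != j -> ~ (a i `<=` a j)%classic) -> (k <= w)%N.
  move=> k a ha hac; apply: ((proj2 Hw) k a); split => // i.
  have [J [[y [By [Jy [tau Htau]]]] ->]] := ha i.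
  left; exists (FJ b c J); split => //.
  apply: (FJ_proper HA By Jy).
  by have := Htau 0%N; rewrite mul1mx.
have Hnc' : ~ exists t, [set lprod Sigma sigma t *m x | x in Bs b c]%classic `<=` interior (Bs b c : set 'cV[R]_n).
  by rewrite -EB.
have [sig' [p [p0 [pw [per Hx]]]]] := periodic_exists HS HA HSig Hnc' Wb.
exists sig', p; split; last split.
- move=> [t Ht]; have [x [Bx nint]] := Hx t; apply: nint.
  rewrite -EB; apply: Ht; exists x; [by rewrite EB | by []].
- by split.
- by exists w; rewrite EB.
Qed.
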